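(* Let $\alpha:\{0,1,2\}^*\to\{0,1,2\}^*$ be the $31$-uniform morphism defined by $\alpha(0)=0121021201020120210201021201210$, $\alpha(1)=1202102012101201021012102012021$, $\alpha(2)=2010210120212012102120210120102$. Then each $\alpha(a)$ is a palindrome, $\alpha(0)=z^R0z$ with $z=210201021201210$, and the infinite fixed point $\alpha^\omega(0)$ contains no factor that is a $(p/q)$-power with $p/q>\tfrac74$.
   Context: A word $x=x[1..n]$ has period $q$ if $x[i]=x[i+q]$ for $1\le i\le n-q$. For integers $p>q\ge1$, $x$ is a $(p/q)$-power if it has length $p$ and period $q$. $z^R$ denotes the reversal of $z$. The fixed point $\alpha^\omega(0)$ is the infinite word having every $\alpha^n(0)$ as a prefix. *)

(* Defs.v *)
From mathcomp Require Import all_boot.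
Set Implicit Arguments. Unset Strict Implicit. Unset Printing Implicit Defensive.

Definition alpha0 : seq nat := [:: 0; 1; 2; 1; 0; 2; 1; 2; 0; 1; 0; 2; 0; 1; 2; 0; 2; 1; 0; 2; 0; 1; 0; 2; 1; 2; 0; 1; 2; 1; 0].
Definition alpha1 : seq nat := [:: 1; 2; 0; 2; 1; 0; 2; 0; 1; 2; 1; 0; 1; 2; 0; 1; 0; 2; 1; 0; 1; 2; 1; 0; 2; 0; 1; 2; 0; 2; 1].
Definition alpha2 : seq nat := [:: 2; 0; 1; 0; 2; 1; 0; 1; 2; 0; 2; 1; 2; 0; 1; 2; 1; 0; 2; 1; 2; 0; 2; 1; 0; 1; 2; 0; 1; 0; 2].

(* the morphism on letters (letters other than 0,1 are only 2 in {0,1,2}) *)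
Definition alpha (a : nat) : seq nat :=
  match a with 0 => alpha0 | 1 => alpha1 | _ => alpha2 end.

Definition alpha_word (s : seq nat) : seq nat := flatten (map alpha s).

Definition zword : seq nat := [:: 2; 1; 0; 2; 0; 1; 0; 2; 1; 2; 0; 1; 2; 1; 0].

Definition palindrome (s : seq nat) : Prop := rev s = s.

Definition is_alpha_fixed_point (w : nat -> nat) : Prop :=
  forall n i, i < size (iter n alpha_word [:: 0]) ->
    w i = nth 0 (iter n alpha_word [:: 0]) i.

(* the factor w[i .. i+p-1] (0-indexed) is a (p/q)-power: length p, period q *)
Definition factor_is_power (w : nat -> nat) (i p q : nat) : Prop :=
  [/\ 1 <= q, q < p & forall k, k + q < p -> w (i + k) = w (i + k + q)].

(* Main.v *)
Require Import Defs.
From mathcomp Require Import all_boot.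
From mathcomp Require Import zify.

Definition S2 : seq (seq nat) :=
  [:: [:: 0; 1]; [:: 0; 2]; [:: 1; 0]; [:: 1; 2]; [:: 2; 0]; [:: 2; 1]].

Lemma size_alpha a : size (alpha a) = 31.
Proof. by case: a => [|[|a]]. Qed.

Lemma alpha_lt3 a r : nth 0 (alpha a) r < 3.
Proof.
case: a => [|[|a]] /=;
  (do 31! (case: r => [|r]; first by []); by rewrite nth_default).
Qed.

Lemma nth_alpha_word s k r : r < 31 -> k < size s ->
  nth 0 (alpha_word s) (31 * k + r) = nth 0 (alpha (nth 0 s k)) r.
Proof.
move=> hr; elim: s k => [|a s IH] [|k] //= hk.
  by rewrite /alpha_word /= muln0 add0n nth_cat size_alpha hr.
rewrite /alpha_word /= nth_cat size_alpha.
have -> : (31 * k.+1 + r < 31) = false by lia.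
have -> : 31 * k.+1 + r - 31 = 31 * k + r by lia.
exact: IH.
Qed.

Lemma size_iter n : size (iter n alpha_word [:: 0]) = 31 ^ n.
Proof.
elim: n => [|n IH] //=.
have H : forall s, size (alpha_word s) = 31 * size s.
  elim=> [|a s IHs] //=; rewrite /alpha_word /= size_cat size_alpha.
  by rewrite -/(alpha_word s) IHs mulnS.
by rewrite H IH expnS.
Qed.

Section W.
Variable w : nat -> nat.
Hypothesis hw : is_alpha_fixed_point w.

Lemma wblock j r : r < 31 -> w (31 * j + r) = nth 0 (alpha (w j)) r.
Proof.
move=> hr.
have hj : j < 31 ^ j by apply: ltn_expl.
rewrite (hw j.+1); last first.
  rewrite size_iter expnS; lia.
rewrite (hw j) ?size_iter //= nth_alpha_word // size_iter //.
Qed.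

Lemma wdiv i : w i = nth 0 (alpha (w (i %/ 31))) (i %% 31).
Proof. by rewrite -wblock ?ltn_pmod // mulnC -divn_eq. Qed.

Lemma w_lt3 i : w i < 3.
Proof. by rewrite wdiv alpha_lt3. Qed.

Lemma w0 : w 0 = 0.
Proof. by rewrite (hw 0). Qed.
Lemma w1 : w 1 = 1.
Proof. by rewrite (hw 1) ?size_iter. Qed.

Lemma S2_inner a r : a < 3 -> r < 30 ->
  [:: nth 0 (alpha a) r; nth 0 (alpha a) r.+1] \in S2.
Proof.
case: a => [|[|[|a]]] // _;
  (do 30! (case: r => [|r]; first by []); by []).
Qed.

Lemma S2_cross a b : [:: a; b] \in S2 ->
  [:: nth 0 (alpha a) 30; nth 0 (alpha b) 0] \in S2.
Proof.
case: a => [|[|[|a]]]; case: b => [|[|[|b]]] //.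
Qed.

Lemma wS2 i : [:: w i; w i.+1] \in S2.
Proof.
elim/ltn_ind: i => i IH.
case: (ltnP (i %% 31) 30) => hr.
  have -> : i.+1 = 31 * (i %/ 31) + (i %% 31).+1.
    by rewrite {1}(divn_eq i 31) mulnC addnS.
  rewrite {1}(divn_eq i 31) mulnC !wblock //; last lia.
  exact: S2_inner (w_lt3 _) hr.
have hr' : i %% 31 = 30 by have := ltn_pmod i (isT : 0 < 31); lia.
have -> : i.+1 = 31 * (i %/ 31).+1 + 0.
  by rewrite {1}(divn_eq i 31) hr' mulnS; lia.
rewrite {1}(divn_eq i 31) mulnC hr' !wblock //.
apply: S2_cross; apply: IH.
have := divn_eq i 31; lia.
Qed.

Definition win (s : seq nat) r k := nth 0 (alpha (nth 0 s 0) ++ alpha (nth 0 s 1)) (r + k).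

Lemma window i : exists2 s, s \in S2 & forall k, k < 32 ->
  w (i + k) = win s (i %% 31) k.
Proof.
exists [:: w (i %/ 31); w (i %/ 31).+1]; first exact: wS2.
move=> k hk; rewrite /win /= nth_cat size_alpha.
have hr := ltn_pmod i (isT : 0 < 31).
case: ltnP => h.
  by rewrite {1}(divn_eq i 31) mulnC -addnA wblock.
have -> : i + k = 31 * (i %/ 31).+1 + (i %% 31 + k - 31).
  by rewrite {1}(divn_eq i 31) mulnS; lia.
  rewrite wblock //; lia.
Qed.

Definition sync_check :=
  all (fun s1 => all (fun s2 => all (fun r1 => all (fun r2 =>
    (mkseq (win s1 r1) 11 == mkseq (win s2 r2) 11) ==> (r1 == r2))
    (iota 0 31)) (iota 0 31)) S2) S2.

Lemma sync_ok : sync_check.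
Proof. by vm_compute. Qed.

Lemma sync i1 i2 : (forall k, k < 11 -> w (i1 + k) = w (i2 + k)) ->
  i1 %% 31 = i2 %% 31.
Proof.
move=> H.
have [s1 h1 e1] := window i1; have [s2 h2 e2] := window i2.
have m1 : i1 %% 31 \in iota 0 31 by rewrite mem_iota ltn_pmod.
have m2 : i2 %% 31 \in iota 0 31 by rewrite mem_iota ltn_pmod.
have := sync_ok.
move=> /allP /(_ _ h1) /allP /(_ _ h2) /allP /(_ _ m1) /allP /(_ _ m2) /implyP HH.
apply/eqP/HH; apply/eqP; rewrite /mkseq; apply/eq_in_map => k.
rewrite mem_iota => /andP [_ hk].
rewrite -e1 -?e2 ?H //; lia.
Qed.

Definition small_check :=
  all (fun s => all (fun r => all (fun q =>
    ~~ all (fun k => win s r k == win s r (k + q)) (iota 0 ((7 * q) %/ 4 + 1 - q)))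
    (iota 1 14)) (iota 0 31)) S2.

Lemma small_ok : small_check.
Proof. by vm_compute. Qed.

Definition letter_check :=
  all (fun a => all (fun b => all (fun r =>
    (nth 0 (alpha a) r == nth 0 (alpha b) r) ==> (a == b))
    (iota 0 31)) (iota 0 3)) (iota 0 3).

Lemma letter_ok : letter_check.
Proof. by vm_compute. Qed.

Lemma letter_inj a b r : a < 3 -> b < 3 -> r < 31 ->
  nth 0 (alpha a) r = nth 0 (alpha b) r -> a = b.
Proof.
move=> ha hb hr e.
have ma : a \in iota 0 3 by rewrite mem_iota.
have mb : b \in iota 0 3 by rewrite mem_iota.
have mr : r \in iota 0 31 by rewrite mem_iota.
have := letter_ok.
move=> /allP /(_ _ ma) /allP /(_ _ mb) /allP /(_ _ mr) /implyP HH.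
by apply/eqP/HH; apply/eqP.
Qed.

Lemma nopow q : forall i p, factor_is_power w i p q -> ~ 7 * q < 4 * p.
Proof.
elim/ltn_ind: q => q IH i p [hq hqp hper] hlt.
case: (ltnP q 15) => hq15.
  have [s hs e] := window i.
  have mr : i %% 31 \in iota 0 31 by rewrite mem_iota ltn_pmod.
  have mq : q \in iota 1 14 by rewrite mem_iota; lia.
  have := small_ok.
  move=> /allP /(_ _ hs) /allP /(_ _ mr) /allP /(_ _ mq) /negP; apply.
  apply/allP => k; rewrite mem_iota => /andP [_ hk].
  have hk1 : k + q < p by lia.
  rewrite -e; last lia.
  rewrite -e; last lia.
  by rewrite addnA hper.
have hs : i %% 31 = (i + q) %% 31.
  apply: sync => k hk.
  rewrite hper; last lia.
  by rewrite addnAC.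
have hd : q %% 31 = 0 by lia.
set q' := q %/ 31.
have hqq : q = 31 * q' by rewrite /q'; lia.
set p' := (i + p - q - 1) %/ 31 - i %/ 31 + 1 + q'.
have hq' : 1 <= q' by lia.
apply: (IH q' _ (i %/ 31) p').
- lia.
- split; [done | rewrite /p'; lia |].

move=> k hk.
set j := i %/ 31 + k.
set t := maxn i (31 * j).
have ht1 : 31 * j <= t by rewrite /t leq_maxr.
have ht2 : i <= t by rewrite /t leq_maxl.
have htc : t = i \/ t = 31 * j by rewrite /t /maxn; case: ifP; auto.
have ht3 : t < 31 * j + 31.
  case: htc => ->; last lia.
  rewrite /j; have := divn_eq i 31; have := ltn_pmod i (isT : 0 < 31); lia.
have ht4 : t - i + q < p.
  case: htc => ->; first lia.
  move: hk; rewrite /p' /j; have := divn_eq (i + p - q - 1) 31.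
  have := ltn_pmod (i + p - q - 1) (isT : 0 < 31); lia.
have e1 : w t = nth 0 (alpha (w j)) (t - 31 * j).
  rewrite -wblock; last lia. congr w; lia.
have e2 : w (t + q) = nth 0 (alpha (w (j + q'))) (t - 31 * j).
  rewrite -wblock; last lia. congr w; lia.
have := hper (t - i) ht4.
have -> : i + (t - i) = t by lia.
rewrite e1 e2 => /letter_inj; apply; try apply: w_lt3; lia.
- move: hlt; rewrite /p' hqq.
  have := divn_eq (i + p - 31 * q' - 1) 31; have := ltn_pmod (i + p - 31 * q' - 1) (isT : 0 < 31).
  have := divn_eq i 31; have := ltn_pmod i (isT : 0 < 31). lia.
Qed.


End W.

Theorem mainTheorem10 :
  (forall a, a < 3 -> palindrome (alpha a)) /\
  alpha 0 = rev zword ++ [:: 0] ++ zword /\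
  (forall w : nat -> nat, is_alpha_fixed_point w ->
     forall i p q, factor_is_power w i p q -> ~ (7 * q < 4 * p)).
Proof.
split; first by case=> [|[|[|a]]] //= _; rewrite /palindrome; vm_compute.
split; first by vm_compute.
move=> w hw i p q; exact: nopow.
Qed.
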